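(* Let $X$ be a real Hilbert space and $A,B$ closed convex nonempty subsets of $X$ such that $E$ and $F$ are nonempty and bounded. Let $\{A_n\}$, $\{B_n\}$ be sequences of closed convex nonempty subsets of $X$ with $A_n\to A$ and $B_n\to B$ in the Attouch–Wets sense. Suppose the couple $(A,B)$ is regular, and let $\delta,\epsilon>0$. For each $n\in\mathbb N$ let $a_n,x_n\in A_n$ and $b_n,y_n\in B_n$ be such that $\mathrm{dist}(x_n,E)\to0$ and $\mathrm{dist}(y_n,F)\to0$. Then there exists $n_2\in\mathbb N$ such that for every $n\ge n_2$: (i) if $\mathrm{dist}(a_n,E)\ge 2\epsilon$, $\mathrm{dist}(b_n,F)\ge2\epsilon$ and $a_n=P_{A_n}b_n$, then $\cos\bigl(x_n-a_n,\,b_n-(a_n+v)\bigr)\le\delta$; (ii) if $\mathrm{dist}(a_n,E)\ge 2\epsilon$, $\mathrm{dist}(b_{n+1},F)\ge2\epsilon$ and $b_{n+1}=P_{B_{n+1}}a_n$, then $\cos\bigl(y_{n+1}-b_{n+1},\,a_n+v-b_{n+1}\bigr)\le\delta$.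
   Context: $P_C$ denotes the metric projection onto a closed convex nonempty set $C$; $B_X$ is the closed unit ball; $\mathrm{dist}(x,S)=\inf_{s\in S}\|x-s\|$, $\mathrm{dist}(S,T)=\inf_{s\in S}\mathrm{dist}(s,T)$. $E=\{a\in A:\mathrm{dist}(a,B)=\mathrm{dist}(A,B)\}$, $F=\{b\in B:\mathrm{dist}(b,A)=\mathrm{dist}(A,B)\}$, $v=P_{\overline{B-A}}(0)$. For nonzero $u,w$, $\cos(u,w)=\langle u,w\rangle/(\|u\|\|w\|)$. Attouch–Wets convergence: for nonempty closed $C,D$ and $N\in\mathbb N$ let $e_N(C,D)=\sup_{c\in C\cap NB_X}\mathrm{dist}(c,D)$ ($0$ if $C\cap NB_X=\emptyset$) and $h_N(C,D)=\max\{e_N(C,D),e_N(D,C)\}$; $C_j\to C$ if $\lim_j h_N(C_j,C)=0$ for every $N$. The couple $(A,B)$ (with $E,F\ne\emptyset$) is regular if for each $\epsilon>0$ there is $\delta>0$ such that $\mathrm{dist}(x,E)\le\epsilon$ whenever $\max\{\mathrm{dist}(x,A),\mathrm{dist}(x,B-v)\}\le\delta$. *)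

(* Defs.v *)
From HB Require Import structures.
From mathcomp Require Import all_boot all_order all_algebra.
From mathcomp Require Import all_classical all_reals all_analysis.
Set Implicit Arguments. Unset Strict Implicit. Unset Printing Implicit Defensive.
Import Order.TTheory GRing.Theory Num.Theory numFieldNormedType.Exports.
Local Open Scope classical_set_scope.
Local Open Scope ring_scope.

Section Defs.
Context {R : realType} {V : normedModType R}.

Definition is_inner_product (inner : V -> V -> R) : Prop :=
  [/\ (forall x y, inner x y = inner y x),
      (forall (a : R) x y z, inner (a *: x + y) z = a * inner x z + inner y z)
    & (forall x, `|x| ^+ 2 = inner x x)].

Definition convex_set (C : set V) : Prop :=
  forall x y (t : R), C x -> C y -> 0 <= t <= 1 -> C (t *: x + (1 - t) *: y).

Definition ccn (C : set V) : Prop := [/\ closed C, convex_set C & C !=set0].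

Definition norm_bounded (C : set V) : Prop := exists M : R, forall c, C c -> `|c| <= M.

Definition dist (x : V) (S : set V) : R := inf [set `|x - s| | s in S].

Definition dist_sets (S T : set V) : R := inf [set dist s T | s in S].

(* p = P_C x : p is the (unique, in a Hilbert space) nearest point of C to x *)
Definition is_proj (C : set V) (x p : V) : Prop :=
  C p /\ forall c, C c -> `|x - p| <= `|x - c|.

Definition Eset (A B : set V) : set V :=
  [set a | A a /\ dist a B = dist_sets A B].
Definition Fset (A B : set V) : set V :=
  [set b | B b /\ dist b A = dist_sets A B].

Definition minus_set (B A : set V) : set V := [set b - a | b in B & a in A].
Definition translate_set (B : set V) (v : V) : set V := [set b - v | b in B].

(* cos(u,w) = <u,w>/(||u|| ||w||)  (equal to 0 if u = 0 or w = 0 by the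
   convention x / 0 = 0) *)
Definition cosine (inner : V -> V -> R) (u w : V) : R :=
  inner u w / (`|u| * `|w|).

Definition e_N (N : nat) (C D : set V) : R :=
  let S := C `&` [set x | `|x| <= N%:R] in
  if `[< S !=set0 >] then sup [set dist c D | c in S] else 0.

Definition h_N (N : nat) (C D : set V) : R := Num.max (e_N N C D) (e_N N D C).

Definition AW_conv (Cs : nat -> set V) (C : set V) : Prop :=
  forall N : nat, (fun j => h_N N (Cs j) C) @ \oo --> (0 : R).

(* regularity of the couple (A,B), with v = P_{cl(B-A)}(0) *)
Definition regular_couple (A B : set V) (v : V) : Prop :=
  forall eps : R, 0 < eps -> exists2 delta : R, 0 < delta &
    forall x, Num.max (dist x A) (dist x (translate_set B v)) <= delta ->
      dist x (Eset A B) <= eps.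

End Defs.

(* Main.v *)
Require Import Defs.
From HB Require Import structures.
From mathcomp Require Import all_boot all_order all_algebra.
From mathcomp Require Import all_classical all_reals all_analysis.
From mathcomp Require Import ring lra.
Import Order.TTheory GRing.Theory Num.Theory numFieldNormedType.Exports.
Local Open Scope classical_set_scope.
Local Open Scope ring_scope.



Section Inner.
Context {R : realType} {X : normedModType R} {inner : X -> X -> R}
  (hin : is_inner_product inner).

Lemma ipC x y : inner x y = inner y x.
Proof. by case: hin. Qed.

Lemma ip_lin (a : R) x y z : inner (a *: x + y) z = a * inner x z + inner y z.
Proof. by case: hin. Qed.

Lemma ipnorm x : `|x| ^+ 2 = inner x x.
Proof. by case: hin. Qed.

Lemma ip0l z : inner 0 z = 0.
Proof.
have := ip_lin 1 0 0 z; rewrite scaler0 addr0 mul1r => h.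
have : inner 0 z + inner 0 z = inner 0 z + 0 by rewrite -h addr0.
by move/addrI.
Qed.

Lemma ipDl x y z : inner (x + y) z = inner x z + inner y z.
Proof. by have := ip_lin 1 x y z; rewrite scale1r mul1r. Qed.

Lemma ipZl a x z : inner (a *: x) z = a * inner x z.
Proof. by have := ip_lin a x 0 z; rewrite addr0 ip0l addr0. Qed.

Lemma ipNl x z : inner (- x) z = - inner x z.
Proof. by rewrite -scaleN1r ipZl mulN1r. Qed.

Lemma ipBl x y z : inner (x - y) z = inner x z - inner y z.
Proof. by rewrite ipDl ipNl. Qed.

Lemma ipDr x y z : inner z (x + y) = inner z x + inner z y.
Proof. by rewrite ipC ipDl !(ipC z). Qed.

Lemma ipZr a x z : inner z (a *: x) = a * inner z x.
Proof. by rewrite ipC ipZl ipC. Qed.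

Lemma ipNr x z : inner z (- x) = - inner z x.
Proof. by rewrite ipC ipNl ipC. Qed.

Lemma ipBr x y z : inner z (x - y) = inner z x - inner z y.
Proof. by rewrite ipDr ipNr. Qed.

Lemma ip0r z : inner z 0 = 0.
Proof. by rewrite ipC ip0l. Qed.

Lemma normD2 x y : `|x + y| ^+ 2 = `|x| ^+ 2 + 2 * inner x y + `|y| ^+ 2.
Proof. rewrite !ipnorm ipDl !ipDr (ipC y x); ring. Qed.

Lemma normB2 x y : `|x - y| ^+ 2 = `|x| ^+ 2 - 2 * inner x y + `|y| ^+ 2.
Proof. rewrite normD2 normrN ipNr; ring. Qed.

Lemma CS x y : inner x y <= `|x| * `|y|.
Proof.
have hx := normr_ge0 x; have hy := normr_ge0 y.
have h0 := sqr_ge0 (`| `|y| *: x - `|x| *: y |).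
rewrite normB2 !normrZ !ipZl !ipZr !ger0_norm // in h0.
have [hxy|hxy] := boolP (0 < `|x| * `|y|).
  nra.
have e : `|x| * `|y| = 0.
  by apply/eqP; rewrite eq_le mulr_ge0 // andbT leNgt.
move/eqP: e; rewrite mulf_eq0 => /orP[/eqP|/eqP] e.
  by move/eqP: e; rewrite normr_eq0 => /eqP ->; rewrite ip0l normr0 mul0r.
by move/eqP: e; rewrite normr_eq0 => /eqP ->; rewrite ip0r normr0 mulr0.
Qed.

End Inner.
Section Dist.
Context {R : realType} {X : normedModType R}.
Implicit Types (S : set X) (x y : X).

Lemma dist_le {S} x {s} : S s -> dist x S <= `|x - s|.
Proof.
move=> Ss; rewrite /dist; apply: ge_inf; last by exists s.
by exists 0 => _ [t _ <-].
Qed.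

Lemma dist_lb {S x} m : S !=set0 -> (forall s, S s -> m <= `|x - s|) -> m <= dist x S.
Proof.
move=> [s0 Ss0] h; apply: lb_le_inf; first by exists `|x - s0|, s0.
by move=> _ [t St <-]; apply: h.
Qed.

Lemma dist_ge0 {S} x : S !=set0 -> 0 <= dist x S.
Proof. by move=> hS; apply: dist_lb. Qed.

Lemma dist_lt {S x r} : S !=set0 -> dist x S < r -> exists2 s, S s & `|x - s| < r.
Proof.
move=> [s0 Ss0] h; have [_ [s Ss <-] hs] := inf_lt (ex_intro _ _ (ex_intro2 _ _ s0 Ss0 erefl)) h.
by exists s.
Qed.

Lemma dist_lip {S} x y : S !=set0 -> dist x S <= `|x - y| + dist y S.
Proof.
move=> hS; rewrite addrC -lerBlDr; apply: dist_lb => // s Ss.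
rewrite lerBlDr; apply: le_trans (dist_le _ Ss) _.
by rewrite [_ + `|x - y|]addrC; apply: ler_distD.
Qed.

Lemma comb_eq (t : R) (p c : X) : p + t *: (c - p) = t *: c + (1 - t) *: p.
Proof.
by rewrite scalerBr scalerBl scale1r addrCA addrA.
Qed.

End Dist.



Lemma small_le0 {R : realType} (x w : R) :
  (forall t, 0 < t -> t <= 1 -> x <= t * w) -> x <= 0.
Proof.
move=> H; rewrite leNgt; apply/negP => hx.
have hw : 0 < w by have := H 1 ltr01 (lexx _); rewrite mul1r => h; exact: lt_le_trans hx h.
have hxw : 0 < x + w by rewrite addr_gt0.
have ht1 : x / (x + w) <= 1 by rewrite ler_pdivrMr // mul1r lerDl ltW.
have := H (x / (x + w)) (divr_gt0 hx hxw) ht1.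
rewrite mulrAC ler_pdivlMr //; nra.
Qed.

Lemma small_eta {R : realType} {d tau : R} : 0 <= d -> 0 < tau ->
  exists2 eta, 0 < eta & 2 * d * eta + eta ^+ 2 <= tau ^+ 2.
Proof.
move=> hd ht; set m := tau ^+ 2 / (2 * d + 1).
have hm : 0 < m by rewrite divr_gt0 ?exprn_gt0 // ltr_wpDl ?mulr_ge0.
exists (Num.min 1 m); first by rewrite lt_min ltr01 hm.
have h1 : Num.min 1 m <= 1 by rewrite ge_min lexx.
have h2 : Num.min 1 m <= m by rewrite ge_min lexx orbT.
have h0 : 0 < Num.min 1 m by rewrite lt_min ltr01 hm.
move: h2; rewrite /m ler_pdivlMr ?ltr_wpDl ?mulr_ge0 // => h2.
nra.
Qed.

Section Geom.
Context {R : realType} {X : normedModType R} (inner : X -> X -> R)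
  (hin : is_inner_product inner).

Lemma var_ineq q p c :
  (forall t, 0 < t -> t <= 1 -> `|q - p| <= `|q - (p + t *: (c - p))|) ->
  inner (c - p) (q - p) <= 0.
Proof.
move=> H; apply: (@small_le0 _ _ (`|c - p| ^+ 2 / 2)) => t t0 t1.
have h := H t t0 t1.
rewrite (_ : q - (p + t *: (c - p)) = (q - p) - t *: (c - p)) in h; last first.
  by rewrite opprD addrA.
have h2 : `|q - p| ^+ 2 <= `|(q - p) - t *: (c - p)| ^+ 2.
  by rewrite ler_sqr ?nnegrE.
rewrite (normB2 hin (q - p)) normrZ ger0_norm ?(ltW t0) // (ipZr hin) (ipC hin) in h2.
nra.
Qed.

Lemma proj_ineq C q p c : Defs.convex_set C -> is_proj C q p -> C c ->
  inner (c - p) (q - p) <= 0.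
Proof.
move=> hC [Cp hp] Cc; apply: var_ineq => t t0 t1.
rewrite comb_eq; apply: hp; apply: hC => //.
by rewrite (ltW t0) t1.
Qed.

End Geom.



Section V.
Context {R : realType} {X : normedModType R} {inner : X -> X -> R}
  (hin : is_inner_product inner).
Context (A B : set X) (v : X) (cA : Defs.convex_set A) (cB : Defs.convex_set B)
  (nA : A !=set0) (nB : B !=set0)
  (hv : is_proj (closure (minus_set B A)) 0 v).

Let K := minus_set B A.

Lemma K_mem {a b} : A a -> B b -> K (b - a).
Proof. by move=> Aa Bb; exists b => //; exists a. Qed.

Lemma K1 {c} : K c -> `|v| <= `|c|.
Proof.
move=> Kc; have := hv.2 c (subset_closure Kc).
by rewrite !sub0r !normrN.
Qed.

Lemma K2 {eta} : 0 < eta -> exists2 c, K c & `|v - c| < eta.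
Proof.
move=> he; have [c [Kc bc]] := hv.1 _ (nbhsx_ballx v eta he).
by exists c => //; move: bc; rewrite -ball_normE.
Qed.

Lemma K3 {c1 c2 t} : K c1 -> K c2 -> 0 <= t <= 1 -> K (t *: c1 + (1 - t) *: c2).
Proof.
move=> [b1 Bb1 [a1 Aa1 <-]] [b2 Bb2 [a2 Aa2 <-]] ht.
have -> : t *: (b1 - a1) + (1 - t) *: (b2 - a2) =
  (t *: b1 + (1 - t) *: b2) - (t *: a1 + (1 - t) *: a2).
  by rewrite !scalerBr opprD addrACA.
by apply: K_mem; [apply: cA | apply: cB].
Qed.

Lemma VI {c} : K c -> 0 <= inner (c - v) v.
Proof.
move=> Kc.
suff : inner (c - v) (0 - v) <= 0 by rewrite sub0r (ipNr hin) oppr_le0.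
apply: var_ineq => // t t0 t1.
rewrite !sub0r !normrN comb_eq.
apply/ler_addgt0Pr => e e0.
have [c' Kc' hc'] := K2 e0.
have ht : 0 <= t <= 1 by rewrite (ltW t0) t1.
have := K1 (K3 Kc Kc' ht).
have -> : t *: c + (1 - t) *: c' = (t *: c + (1 - t) *: v) + (1 - t) *: (c' - v).
  by rewrite scalerBr addrACA subrr addr0.
move=> h; apply: (le_trans h); rewrite (le_trans (ler_normD _ _)) // lerD2l.
rewrite normrZ ger0_norm ?subr_ge0 // distrC.
have : `|v - c'| <= e by exact: ltW.
have := normr_ge0 (v - c').
nra.
Qed.

Lemma DS : dist_sets A B <= `|v|.
Proof.
apply/ler_addgt0Pr => e e0.
have [_ [b Bb [a Aa <-]] hc] := K2 e0.
have h1 : dist_sets A B <= dist a B.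
  rewrite /dist_sets; apply: ge_inf; last by exists a.
  by exists 0 => _ [a' _ <-]; apply: dist_ge0.
apply: (le_trans h1); apply: (le_trans (dist_le _ Bb)).
rewrite -opprB normrN.
have := ler_distD v 0 (b - a).
rewrite !sub0r !normrN.
move=> h; apply: (le_trans h); rewrite lerD2l; exact: ltW.
Qed.

Lemma K_close {c eta} : K c -> `|c| < `|v| + eta -> 0 < eta ->
  `|c - v| ^+ 2 <= 2 * `|v| * eta + eta ^+ 2.
Proof.
move=> Kc hc he.
have h := VI Kc.
rewrite (normB2 hin) (ipBl hin) -(ipnorm hin) in h *.
have := normr_ge0 c; have := normr_ge0 v.
nra.
Qed.

Lemma F3E e : Eset A B e -> forall tau, 0 < tau ->
  exists2 b, B b & `|b - (e + v)| <= tau.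
Proof.
move=> [Ae he] tau ht.
have [eta eta0 heta] := small_eta (normr_ge0 v) ht.
have : dist e B < `|v| + eta by rewrite he (le_lt_trans DS) // ltrDl.
move/(dist_lt nB) => [b Bb hb].
exists b => //.
have Kc : K (b - e) by apply: K_mem.
rewrite distrC in hb; have h := K_close Kc hb eta0.
rewrite opprD addrA -(ler_sqr (normr_ge0 _) (ltW ht)).
exact: le_trans h heta.
Qed.

Lemma F3F f : Fset A B f -> forall tau, 0 < tau ->
  exists2 a, A a & `|(f - v) - a| <= tau.
Proof.
move=> [Bf hf] tau ht.
have [eta eta0 heta] := small_eta (normr_ge0 v) ht.
have : dist f A < `|v| + eta by rewrite hf (le_lt_trans DS) // ltrDl.
move/(dist_lt nA) => [a Aa ha].
exists a => //.
have Kc : K (f - a) by apply: K_mem.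
have := K_close Kc ha eta0 => h.
rewrite addrAC -(ler_sqr (normr_ge0 _) (ltW ht)).
exact: le_trans h heta.
Qed.

End V.



Section AW.
Context {R : realType} {X : normedModType R}.

Lemma dist_le_eN {N : nat} {C D : set X} {c} : C c -> `|c| <= N%:R -> D !=set0 ->
  dist c D <= e_N N C D.
Proof.
move=> Cc hc [d0 Dd0]; rewrite /e_N.
have hS : (C `&` [set x | `|x| <= N%:R]) !=set0 by exists c.
rewrite (asboolT hS); apply: ub_le_sup; last by exists c.
exists (N%:R + `|d0|) => _ [c' [_ hc'] <-].
apply: (le_trans (dist_le _ Dd0)); apply: (le_trans (ler_normB _ _)).
by rewrite lerD2r.
Qed.

Lemma AW_close (Cs : nat -> set X) (C : set X) (N : nat) (th : R) :
  AW_conv Cs C -> C !=set0 -> (forall n, Cs n !=set0) -> 0 < th ->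
  exists n0, forall n, (n0 <= n)%N ->
    (forall c, Cs n c -> `|c| <= N%:R -> exists2 c', C c' & `|c - c'| < th) /\
    (forall c, C c -> `|c| <= N%:R -> exists2 c', Cs n c' & `|c - c'| < th).
Proof.
move=> hAW nC nCs th0.
have [n0 _ Hn] := cvgr0_norm_lt _ (hAW N) _ th0.
exists n0 => n hn; have := Hn n hn => /= hh.
have hh' : h_N N (Cs n) C < th by exact: le_lt_trans (ler_norm _) hh.
split => c Cc hc.
- apply: dist_lt => //; apply: le_lt_trans hh'.
  by apply: le_trans (dist_le_eN Cc hc nC) _; rewrite /h_N le_max lexx.
- apply: dist_lt => //; apply: le_lt_trans hh'.
  by apply: le_trans (dist_le_eN Cc hc (nCs n)) _; rewrite /h_N le_max lexx orbT.
Qed.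

Lemma mix_sub (t : R) (a x : X) : t *: a + (1 - t) *: x - x = t *: (a - x).
Proof. by rewrite scalerBl scale1r addrA addrAC addrK scalerBr. Qed.

Lemma mix1 (a x : X) : 1 *: a + (1 - 1) *: x = a.
Proof. by rewrite subrr scale0r addr0 scale1r. Qed.

Lemma mix_diff (t : R) (p q p' q' w : X) :
  (t *: p + (1 - t) *: q) + w - (t *: p' + (1 - t) *: q') =
  t *: (p + w - p') + (1 - t) *: (q + w - q').
Proof.
rewrite !scalerBr !scalerDr.
have {1}-> : w = t *: w + (1 - t) *: w by rewrite -scalerDl addrC subrK scale1r.
rewrite [_ + (_ - _)]addrACA -opprD.
rewrite -[t *: p + (1 - t) *: q + (t *: w + (1 - t) *: w)]addrACA.
done.
Qed.

Lemma dist_norm_lb (E : set X) (ME : R) z : E !=set0 ->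
  (forall e, E e -> `|e| <= ME) -> `|z| - ME <= dist z E.
Proof.
move=> nE hE; apply: dist_lb => // e Ee.
rewrite lerBlDr; have := ler_normD (z - e) e; rewrite subrK => h.
by apply: (le_trans h); rewrite lerD2l hE.
Qed.

Lemma seg {C : set X} {o p : X} {r eps : R} :
  Defs.convex_set C -> C o -> C p -> 0 < eps -> eps <= `|p - o| -> eps <= r ->
  exists t, [/\ 0 < t <= 1, C (t *: p + (1 - t) *: o), eps <= t * `|p - o|,
    t * `|p - o| <= r & (t < 1 -> t * `|p - o| = r)].
Proof.
move=> hC Co Cp e0 hpo her.
have hpo0 : 0 < `|p - o| by exact: lt_le_trans e0 hpo.
have [hle|hlt] := leP `|p - o| r.
  exists 1; rewrite ltr01 lexx mul1r; split => //.
  - by apply: hC => //; rewrite ler01 lexx.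
  - by rewrite ltxx.
have r0 : 0 < r by exact: lt_le_trans e0 her.
exists (r / `|p - o|).
have ht1 : r / `|p - o| <= 1 by rewrite ler_pdivrMr // mul1r ltW.
have ht0 : 0 < r / `|p - o| by rewrite divr_gt0.
have heq : r / `|p - o| * `|p - o| = r by rewrite divfK // gt_eqF.
split.
- by rewrite ht0 ht1.
- by apply: hC => //; rewrite (ltW ht0) ht1.
- by rewrite heq.
- by rewrite heq.
- by rewrite heq.
Qed.

End AW.



Lemma near_pt {R : realType} {X : normedModType R} {S : set X} {M rho : R} {x} :
  S !=set0 -> (forall s, S s -> `|s| <= M) -> rho <= 1 -> dist x S < rho ->
  exists e, [/\ S e, `|x - e| < rho & `|x| <= M + 1].
Proof.
move=> nS hS r1 hd; have [e Se he] := dist_lt nS hd.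
exists e; split => //.
have := ler_normD (x - e) e; rewrite subrK => h; apply: (le_trans h).
by rewrite addrC lerD // ?hS // (le_trans (ltW he)).
Qed.

Section Main.
Context {R : realType} {X : normedModType R} {inner : X -> X -> R}
  (hin : is_inner_product inner).
Context (A B : set X) (v : X) (cA : Defs.convex_set A) (cB : Defs.convex_set B)
  (nA : A !=set0) (nB : B !=set0)
  (hv : is_proj (closure (minus_set B A)) 0 v).
Context (ME MF : R) (hME : forall e, Eset A B e -> `|e| <= ME)
  (hMF : forall f, Fset A B f -> `|f| <= MF)
  (nE : Eset A B !=set0) (nF : Fset A B !=set0).
Context (eps rho r gam dr : R) (N : nat) (eps0 : 0 < eps) (rho0 : 0 < rho)
  (rho1 : rho <= 1) (rhoeps : rho <= eps)
  (hr : 2 * ME + 2 * MF + 4 + eps <= r)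
  (hN : ME + MF + r + `|v| + gam + 4 <= N%:R)
  (gam0 : 0 < gam) (hg : gam + 4 * rho <= dr) (hrd : rho <= dr)
  (hreg : forall z, Num.max (dist z A) (dist z (translate_set B v)) <= dr ->
     dist z (Eset A B) <= eps / 2).

Let ME0 : 0 <= ME.
Proof. by case: nE => e Ee; exact: le_trans (normr_ge0 e) (hME _ Ee). Qed.
Let MF0 : 0 <= MF.
Proof. by case: nF => e Ee; exact: le_trans (normr_ge0 e) (hMF _ Ee). Qed.

Lemma RA (An : set X) (x a : X) : Defs.convex_set An -> An x -> An a ->
  dist x (Eset A B) < rho -> 2 * eps <= dist a (Eset A B) ->
  (forall c, An c -> `|c| <= N%:R -> exists2 c', A c' & `|c - c'| < rho) ->
  inner (a - x) v <= (3 * `|v| * rho / eps) * `|a - x|.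
Proof.
move=> cAn Anx Ana hdx hda AWA.
have eps0' := eps0; have rho0' := rho0; have rho1' := rho1; have rhoeps' := rhoeps.
have hr' := hr; have hN' := hN; have gam0' := gam0; have ME0' := ME0; have MF0' := MF0.
have [e [Ee hxe hx]] := near_pt nE hME rho1 hdx.
have hax : eps <= `|a - x|.
  move: (le_trans hda (dist_lip a x nE)) => h1.
  have h2 : `|a - x| + dist x (Eset A B) <= `|a - x| + rho by rewrite lerD2l ltW.
  have := le_trans h1 h2; rewrite -lerBlDr => h3; apply: le_trans h3; lra.
have [t [/andP[t0 t1] hz hlo hhi _]] := seg (r:=r) cAn Anx Ana eps0 hax ltac:(lra).
set z := t *: a + (1 - t) *: x in hz.
have hzx : `|z - x| = t * `|a - x| by rewrite /z mix_sub normrZ ger0_norm // ltW.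
have hzN : `|z| <= N%:R.
  have := ler_normD (z - x) x; rewrite subrK => h; apply: (le_trans h).
  have := normr_ge0 v; lra.
have [a' Aa' hza'] := AWA z hz hzN.
have [b0 Bb0 hb0] := F3E hin A B v cA cB nB hv _ Ee _ rho0.
have vi := VI hin A B v cA cB hv (K_mem A B Aa' Bb0).
have c1 := CS hin (z - a') v.
have c2 := CS hin (b0 - (e + v)) v.
have c4 := CS hin (e - x) v.
have p1 : `|z - a'| * `|v| <= rho * `|v| by rewrite ler_wpM2r // ltW.
have p2 : `|b0 - (e + v)| * `|v| <= rho * `|v| by rewrite ler_wpM2r.
have p4 : `|e - x| * `|v| <= rho * `|v| by rewrite ler_wpM2r // distrC ltW.
have key : inner (z - x) v <= 3 * `|v| * rho.
  move: vi c1 c2 c4.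
  rewrite !(ipBl hin) !(ipDl hin) => vi c1 c2 c4.
  lra.
move: key; rewrite /z mix_sub (ipZl hin) => key.
have k0 : 0 <= 3 * `|v| * rho / eps.
  by apply: divr_ge0; [have := normr_ge0 v; nra | lra].
rewrite -(ler_pM2l t0) mulrCA.
apply: (le_trans key).
apply: (@le_trans _ _ (3 * `|v| * rho / eps * eps)).
  by rewrite divfK // gt_eqF.
by rewrite ler_wpM2l.
Qed.


Lemma LB (An Bm : set X) (x a b : X) :
  Defs.convex_set An -> Defs.convex_set Bm -> An x -> An a -> Bm b ->
  dist x (Eset A B) < rho -> 2 * eps <= dist a (Eset A B) ->
  (forall c, An c -> `|c| <= N%:R -> exists2 c', A c' & `|c - c'| < rho) ->
  (forall c, Bm c -> `|c| <= N%:R -> exists2 c', B c' & `|c - c'| < rho) ->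
  (forall c, B c -> `|c| <= N%:R -> exists2 c', Bm c' & `|c - c'| < rho) ->
  gam < `|a + v - b|.
Proof.
move=> cAn cBm Anx Ana Bmb hdx hda AWA AWB1 AWB2.
have eps0' := eps0; have rho0' := rho0; have rho1' := rho1; have rhoeps' := rhoeps.
have hr' := hr; have hN' := hN; have gam0' := gam0; have ME0' := ME0; have MF0' := MF0.
have hg' := hg; have hrd' := hrd.
rewrite ltNge; apply/negP => hab.
have [e [Ee hxe hx]] := near_pt nE hME rho1 hdx.
have hax : eps <= `|a - x|.
  move: (le_trans hda (dist_lip a x nE)) => h1.
  have h2 : `|a - x| + dist x (Eset A B) <= `|a - x| + rho by rewrite lerD2l ltW.
  have := le_trans h1 h2; rewrite -lerBlDr => h3; apply: le_trans h3; lra.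
have [t [/andP[t0 t1] hz hlo hhi hlt]] := seg (r:=r) cAn Anx Ana eps0 hax ltac:(lra).
set z := t *: a + (1 - t) *: x in hz.
have hzx : `|z - x| = t * `|a - x| by rewrite /z mix_sub normrZ ger0_norm // ltW.
have hz1 : `|z| <= `|z - x| + `|x| by have := ler_normD (z - x) x; rewrite subrK.
have hzE : eps <= dist z (Eset A B).
  have [t1'|t1'] := eqVneq t 1.
    by move: hz; rewrite /z t1' mix1 => _; lra.
  have ht1 : t < 1 by rewrite lt_neqAle t1' t1.
  have := hlt ht1 => hr1.
  have h4 := dist_norm_lb _ _ z nE hME.
  have h5 : `|z - x| <= `|z| + `|x| by apply: ler_normB.
  lra.
have [b0 Bb0 hb0] := F3E hin A B v cA cB nB hv _ Ee _ rho0.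
have hb0N : `|b0| <= N%:R.
  have h1 : `|b0| <= `|b0 - (e + v)| + `|e + v|.
    by have := ler_normD (b0 - (e + v)) (e + v); rewrite subrK.
  have h2 := ler_normD e v; have h3 := hME _ Ee; lra.
have [y2 Bmy2 hy2] := AWB2 _ Bb0 hb0N.
have ht01 : 0 <= t <= 1 by rewrite (ltW t0) t1.
have hz' := cBm _ _ _ Bmb Bmy2 ht01.
set z' := t *: b + (1 - t) *: y2 in hz'.
have hxv : `|x + v - y2| <= 3 * rho.
  have h1 := ler_distD (e + v) (x + v) y2.
  have h2 := ler_distD b0 (e + v) y2.
  move: h1; rewrite (_ : x + v - (e + v) = x - e); last first.
    by rewrite opprD addrACA subrr addr0.
  rewrite distrC in hb0; lra.
have hzz : `|z + v - z'| <= gam + 3 * rho.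
  rewrite /z /z' mix_diff.
  apply: (le_trans (ler_normD _ _)).
  rewrite !normrZ (ger0_norm (ltW t0)) ger0_norm ?subr_ge0 //.
  have : t * `|a + v - b| <= t * gam by rewrite ler_wpM2l // ltW.
  have : (1 - t) * `|x + v - y2| <= (1 - t) * (3 * rho) by rewrite ler_wpM2l ?subr_ge0.
  nra.
have hz'N : `|z'| <= N%:R.
  have h1 : `|z'| <= `|z + v| + `|z + v - z'|.
    by have := ler_normB (z + v) (z + v - z'); rewrite subKr.
  have h2 := ler_normD z v.
  lra.
have [c Bc hc] := AWB1 _ hz' hz'N.
have hzNN : `|z| <= N%:R.
  apply: (le_trans hz1); rewrite hzx; have := normr_ge0 v; lra.
have [a' Aa' hza'] := AWA z hz hzNN.
have hdA : dist z A <= dr.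
  by apply: (le_trans (dist_le _ Aa')); lra.
have hdB : dist z (translate_set B v) <= dr.
  have hm : translate_set B v (c - v) by exists c.
  apply: (le_trans (dist_le _ hm)).
  have -> : z - (c - v) = z + v - c by rewrite opprB addrA.
  have := ler_distD z' (z + v) c; lra.
have := hreg z; rewrite ge_max hdA hdB => /(_ isT).
lra.
Qed.

Lemma RB (Bm : set X) (y b : X) : Defs.convex_set Bm -> Bm y -> Bm b ->
  dist y (Fset A B) < rho -> 2 * eps <= dist b (Fset A B) ->
  (forall c, Bm c -> `|c| <= N%:R -> exists2 c', B c' & `|c - c'| < rho) ->
  - ((3 * `|v| * rho / eps) * `|b - y|) <= inner (b - y) v.
Proof.
move=> cBm Bmy Bmb hdy hdb AWB.
have eps0' := eps0; have rho0' := rho0; have rho1' := rho1; have rhoeps' := rhoeps.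
have hr' := hr; have hN' := hN; have gam0' := gam0; have ME0' := ME0; have MF0' := MF0.
have [f [Ff hyf hy]] := near_pt nF hMF rho1 hdy.
have hby : eps <= `|b - y|.
  move: (le_trans hdb (dist_lip b y nF)) => h1.
  have h2 : `|b - y| + dist y (Fset A B) <= `|b - y| + rho by rewrite lerD2l ltW.
  have := le_trans h1 h2; rewrite -lerBlDr => h3; apply: le_trans h3; lra.
have [t [/andP[t0 t1] hz hlo hhi _]] := seg (r:=r) cBm Bmy Bmb eps0 hby ltac:(lra).
set z := t *: b + (1 - t) *: y in hz.
have hzy : `|z - y| = t * `|b - y| by rewrite /z mix_sub normrZ ger0_norm // ltW.
have hzN : `|z| <= N%:R.
  have := ler_normD (z - y) y; rewrite subrK => h; apply: (le_trans h).
  have := normr_ge0 v; lra.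
have [c Bc hzc] := AWB z hz hzN.
have [a0 Aa0 ha0] := F3F hin A B v cA cB nA nB hv _ Ff _ rho0.
have vi := VI hin A B v cA cB hv (K_mem A B Aa0 Bc).
have c1 := CS hin (c - z) v.
have c2 := CS hin ((f - v) - a0) v.
have c4 := CS hin (y - f) v.
have p1 : `|c - z| * `|v| <= rho * `|v| by rewrite ler_wpM2r // distrC ltW.
have p2 : `|(f - v) - a0| * `|v| <= rho * `|v| by rewrite ler_wpM2r.
have p4 : `|y - f| * `|v| <= rho * `|v| by rewrite ler_wpM2r // ltW.
have key : - (3 * `|v| * rho) <= inner (z - y) v.
  move: vi c1 c2 c4.
  rewrite !(ipBl hin) !(ipDl hin) => vi c1 c2 c4.
  lra.
move: key; rewrite /z mix_sub (ipZl hin) => key.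
have k0 : 0 <= 3 * `|v| * rho / eps.
  by apply: divr_ge0; [have := normr_ge0 v; nra | lra].
rewrite -(ler_pM2l t0) mulrN mulrCA.
apply: (le_trans _ key); rewrite lerN2.
apply: (@le_trans _ _ (3 * `|v| * rho / eps * eps)).
  by rewrite divfK // gt_eqF.
by rewrite ler_wpM2l.
Qed.

End Main.



Lemma cos_bound {R : realType} (I U W k g d : R) : 0 <= U -> 0 < g -> g < W ->
  0 <= k -> k <= d * g -> I <= k * U -> 0 < d -> I / (U * W) <= d.
Proof.
move=> U0 g0 gW k0 kd IU d0.
have [->|Un0] := eqVneq U 0; first by rewrite mul0r invr0 mulr0 ltW.
have Up : 0 < U by rewrite lt_neqAle eq_sym Un0 U0.
have UW : 0 < U * W by rewrite mulr_gt0 // (lt_trans g0).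
rewrite ler_pdivrMr //.
have : k * U <= d * g * U by rewrite ler_wpM2r.
have : d * g * U <= d * W * U by rewrite ler_wpM2r ?ler_wpM2l // ltW.
nra.
Qed.

Theorem lemma4p6 (R : realType) (X : completeNormedModType R)
  (inner : X -> X -> R) (A B : set X) (As Bs : nat -> set X) (v : X)
  (delta eps : R) (a x b y : nat -> X) :
  is_inner_product inner ->
  ccn A -> ccn B ->
  Eset A B !=set0 -> norm_bounded (Eset A B) ->
  Fset A B !=set0 -> norm_bounded (Fset A B) ->
  (forall n, ccn (As n)) -> (forall n, ccn (Bs n)) ->
  AW_conv As A -> AW_conv Bs B ->
  is_proj (closure (minus_set B A)) 0 v ->
  regular_couple A B v ->
  0 < delta -> 0 < eps ->
  (forall n, As n (a n) /\ As n (x n) /\ Bs n (b n) /\ Bs n (y n)) ->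
  (fun n => dist (x n) (Eset A B)) @ \oo --> (0 : R) ->
  (fun n => dist (y n) (Fset A B)) @ \oo --> (0 : R) ->
  exists n2 : nat, forall n : nat, (n2 <= n)%N ->
    ((2 * eps <= dist (a n) (Eset A B) -> 2 * eps <= dist (b n) (Fset A B) ->
      is_proj (As n) (b n) (a n) ->
      cosine inner (x n - a n) (b n - (a n + v)) <= delta) /\
     (2 * eps <= dist (a n) (Eset A B) ->
      2 * eps <= dist (b n.+1) (Fset A B) ->
      is_proj (Bs n.+1) (a n) (b n.+1) ->
      cosine inner (y n.+1 - b n.+1) (a n + v - b n.+1) <= delta)).
Proof.
move=> hin [_ cA nA] [_ cB nB] nE [ME hME] nF [MF hMF] hAs hBs AWA AWB hv hreg
  d0 e0 hmem hx hy.
have ME0 : 0 <= ME by case: nE => e Ee; exact: le_trans (normr_ge0 e) (hME _ Ee).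
have MF0 : 0 <= MF by case: nF => e Ee; exact: le_trans (normr_ge0 e) (hMF _ Ee).
have [dr dr0 hdr] := hreg (eps / 2) ltac:(lra).
have [gam gamE] : exists g : R, g = dr / 2 by exists (dr / 2).
have gam0 : 0 < gam by rewrite gamE; lra.
have [r rE] : exists r : R, r = 2 * ME + 2 * MF + 4 + eps by eexists.
have v0 := normr_ge0 v.
have [q qE] : exists q : R, q = delta * gam * eps / (3 * `|v| + 1) by eexists.
have q0 : 0 < q.
  by rewrite qE; apply: divr_gt0; [apply: mulr_gt0; [apply: mulr_gt0|] | ]; lra.
have hq : 3 * `|v| * q <= delta * gam * eps.
  have h : q * (3 * `|v| + 1) = delta * gam * eps by rewrite qE divfK //; lra.
  have := mulr_gt0 (mulr_gt0 d0 gam0) e0; nra.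
have [rho rhoE] : exists rho : R, rho = Num.min (Num.min 1 eps) (Num.min (gam / 8) q) by eexists.
have rho0 : 0 < rho by rewrite rhoE !lt_min ltr01 e0 q0 andbT; lra.
have rho1 : rho <= 1 by rewrite rhoE !ge_min lexx.
have rhoeps : rho <= eps by rewrite rhoE !ge_min lexx orbT.
have rhog : rho <= gam / 8 by rewrite rhoE !ge_min lexx !orbT.
have rhoq : rho <= q by rewrite rhoE !ge_min lexx !orbT.
set N := Num.Def.archi_bound (ME + MF + r + `|v| + gam + 4).
have hN : ME + MF + r + `|v| + gam + 4 <= N%:R.
  by apply/ltW/archi_boundP; rewrite rE; lra.
have hr : 2 * ME + 2 * MF + 4 + eps <= r by rewrite rE lexx.
have hg : gam + 4 * rho <= dr by lra.
have hrd : rho <= dr by lra.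
have ncA : forall n, As n !=set0 by move=> n; case: (hAs n).
have ncB : forall n, Bs n !=set0 by move=> n; case: (hBs n).
have [nx _ Hx] := cvgr0_norm_lt _ hx _ rho0.
have [ny _ Hy] := cvgr0_norm_lt _ hy _ rho0.
have [nA' HA] := AW_close As A N rho AWA nA ncA rho0.
have [nB' HB] := AW_close Bs B N rho AWB nB ncB rho0.
exists (maxn (maxn nx ny) (maxn nA' nB')) => n.
rewrite !geq_max => /andP[/andP[hnx hny] /andP[hnA hnB]].
have hdx : forall m, (nx <= m)%N -> dist (x m) (Eset A B) < rho.
  by move=> m hm; apply: le_lt_trans (ler_norm _) (Hx m hm).
have hdy : forall m, (ny <= m)%N -> dist (y m) (Fset A B) < rho.
  by move=> m hm; apply: le_lt_trans (ler_norm _) (Hy m hm).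
have k0 : 0 <= 3 * `|v| * rho / eps.
  by apply: divr_ge0; [nra | lra].
have kd : 3 * `|v| * rho / eps <= delta * gam.
  rewrite ler_pdivrMr //.
  have : 3 * `|v| * rho <= 3 * `|v| * q by rewrite ler_wpM2l //; lra.
  lra.
have [Aa [Ax [Bb By]]] := hmem n.
have [_ cAn _] := hAs n.
have [_ cBn _] := hBs n.
have [Aa1 [Ax1 [Bb1 By1]]] := hmem n.+1.
have [_ cBn1 _] := hBs n.+1.
have hlb1 := LB hin A B v cA cB nB hv ME MF hME hMF nE nF eps rho r gam dr N
  e0 rho0 rho1 rhoeps hr hN gam0 hg hrd hdr.
split.
- move=> hda hdb hpj.
  have hra := RA hin A B v cA cB nB hv ME MF hME hMF nE nF eps rho r gam N
    e0 rho0 rho1 rhoeps hr hN gam0 (As n) (x n) (a n) cAn Ax Aa (hdx n hnx) hda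
    (HA n hnA).1.
  have hlb := hlb1 (As n) (Bs n) (x n) (a n) (b n) cAn cBn Ax Aa Bb (hdx n hnx) hda
    (HA n hnA).1 (HB n hnB).1 (HB n hnB).2.
  have hp := proj_ineq inner hin (As n) (b n) (a n) (x n) cAn hpj Ax.
  rewrite /cosine; apply: (@cos_bound _ _ _ _ (3 * `|v| * rho / eps) gam) => //.
  + by rewrite distrC.
  + move: hp hra; rewrite distrC !(ipBl hin) !(ipBr hin) ?(ipDr hin) ?(ipBl hin) ?(ipDl hin).
    move=> hp hra; lra.
- move=> hda hdb hpj.
  have hrb := RB hin A B v cA cB nA nB hv ME MF hME hMF nE nF eps rho r gam N
    e0 rho0 rho1 rhoeps hr hN gam0 (Bs n.+1) (y n.+1) (b n.+1) cBn1 By1 Bb1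
    (hdy n.+1 (leqW hny)) hdb (HB n.+1 (leqW hnB)).1.
  have hlb := hlb1 (As n) (Bs n.+1) (x n) (a n) (b n.+1) cAn cBn1 Ax Aa Bb1
    (hdx n hnx) hda (HA n hnA).1 (HB n.+1 (leqW hnB)).1 (HB n.+1 (leqW hnB)).2.
  have hp := proj_ineq inner hin (Bs n.+1) (a n) (b n.+1) (y n.+1) cBn1 hpj By1.
  rewrite /cosine; apply: (@cos_bound _ _ _ _ (3 * `|v| * rho / eps) gam) => //.
  move: hp hrb; rewrite distrC !(ipBl hin) !(ipBr hin) ?(ipDr hin) ?(ipBl hin) ?(ipDl hin).
  move=> hp hrb; lra.
Qed.
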